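(* Consider an instance of ESUP with $n$ clients, $m$ days, integer deadlines $d_{i,j}\ge 1$ and equity parameter $k\in\{0,\dots,m\}$. Let $d^*_j=\max_{1\le i\le n} d_{i,j}$. Build the undirected bipartite graph $G$ with vertex sets $V=\{v_{i,j}: 1\le i\le n, 1\le j\le m\}$, $U=\{u_{d,j}: 1\le j\le m, 1\le d\le d^*_j\}$ and $W=\{w_{i,\ell}: 1\le i\le n, 1\le \ell\le m-k\}$, where for each $i,j$ the vertex $v_{i,j}$ is adjacent exactly to $w_{i,1},\dots,w_{i,m-k}$ and to $u_{1,j},\dots,u_{d_{i,j},j}$ (there are no other edges). Then $G$ has a matching of size $nm$ if and only if there exist schedules $\sigma_1,\dots,\sigma_m$ under which no client is unsatisfied on more than $m-k$ days (i.e., a $k$-equitable set of schedules exists).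
   Context: Equitable Scheduling model: there are $n$ clients and $m$ days; on each day $j$ each client $i$ has one job with integer processing time $p_{i,j}$ and integer deadline $d_{i,j}$, to be processed non-preemptively on a single machine. A schedule for day $j$ is a permutation $\sigma_j$ of $\{1,\dots,n\}$; the completion time of client $i$'s job on day $j$ is $C_{i,j}=\sum_{i_0:\sigma_j(i_0)\le\sigma_j(i)}p_{i_0,j}$. Client $i$ is satisfied on day $j$ if $C_{i,j}\le d_{i,j}$, otherwise unsatisfied. Given $k\in\{0,\dots,m\}$, a set of schedules $\{\sigma_1,\dots,\sigma_m\}$ is $k$-equitable if every client is satisfied on at least $k$ days. ESUP (Equitable Scheduling with Unit Processing Times) is the problem of deciding whether a $k$-equitable set of schedules exists when $p_{i,j}=1$ for all $i,j$ (so $C_{i,j}=\sigma_j(i)$). *)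

(* Defs.v *)
From mathcomp Require Import all_boot all_fingroup.
Set Implicit Arguments. Unset Strict Implicit. Unset Printing Implicit Defensive.

(* Clients are 'I_n (client i corresponds to the paper's client i+1),
   days are 'I_m; d i j is the integer deadline of client i on day j. *)

Definition dstar (n m : nat) (d : 'I_n -> 'I_m -> nat) (j : 'I_m) : nat :=
  \max_(i < n) d i j.

(* a global bound on all deadlines, used only to index the U-vertices *)
Definition dmax (n m : nat) (d : 'I_n -> 'I_m -> nat) : nat :=
  \max_(i < n) \max_(j < m) d i j.

(* Ambient vertex type:
   inl (i, j)            ~ v_{i+1, j+1}
   inr (inl (dd, j))     ~ u_{dd+1, j+1}   (only those with dd+1 <= d*_j are vertices)
   inr (inr (i, l))      ~ w_{i+1, l+1},  l < m - k *)
Definition vtx (n m k D : nat) : finType :=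
  (('I_n * 'I_m) + (('I_D * 'I_m) + ('I_n * 'I_(m - k))))%type.

Definition in_G (n m k : nat) (d : 'I_n -> 'I_m -> nat)
  (x : vtx n m k (dmax d)) : bool :=
  match x with
  | inl _ => true
  | inr (inl (dd, j)) => dd.+1 <= dstar d j
  | inr (inr _) => true
  end.

Arguments in_G {n m k} d x.

Definition adjV (n m k : nat) (d : 'I_n -> 'I_m -> nat)
  (v : 'I_n * 'I_m) (y : (('I_(dmax d) * 'I_m) + ('I_n * 'I_(m - k)))%type) : bool :=
  match y with
  | inl (dd, j') => (j' == v.2) && (dd.+1 <= d v.1 v.2)
  | inr (i', _) => i' == v.1
  end.

Arguments adjV {n m k} d v y.

Definition adjG (n m k : nat) (d : 'I_n -> 'I_m -> nat)
  (x y : vtx n m k (dmax d)) : bool :=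
  match x, y with
  | inl v, inr z => adjV d v z
  | inr z, inl v => adjV d v z
  | _, _ => false
  end.

Arguments adjG {n m k} d x y.

Definition is_matching (n m k : nat) (d : 'I_n -> 'I_m -> nat)
  (M : {set {set vtx n m k (dmax d)}}) : Prop :=
  (forall e, e \in M -> exists x y,
      [/\ in_G d x, in_G d y, adjG d x y & e = [set x; y]]) /\
  (forall e1 e2, e1 \in M -> e2 \in M -> e1 != e2 -> [disjoint e1 & e2]).

Arguments is_matching {n m k} d M.

(* ESUP: unit processing times; sigma j is the schedule of day j, and
   client i occupies position (sigma j i) (0-based), so its completion
   time is C_{i,j} = (sigma j i) + 1. *)
Definition completion (n m : nat) (sigma : 'I_m -> {perm 'I_n}) (i : 'I_n) (j : 'I_m) : nat :=
  (sigma j i).+1.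

Definition satisfied (n m : nat) (d : 'I_n -> 'I_m -> nat)
  (sigma : 'I_m -> {perm 'I_n}) (i : 'I_n) (j : 'I_m) : bool :=
  completion sigma i j <= d i j.

Definition k_equitable (n m : nat) (d : 'I_n -> 'I_m -> nat) (k : nat)
  (sigma : 'I_m -> {perm 'I_n}) : Prop :=
  forall i : 'I_n, k <= #|[set j : 'I_m | satisfied d sigma i j]|.

(* Main.v *)
Require Import Defs.
From mathcomp Require Import all_boot all_fingroup.
From mathcomp Require Import zify.
Set Implicit Arguments. Unset Strict Implicit. Unset Printing Implicit Defensive.


Section Back.
Variables (n m k : nat) (d : 'I_n -> 'I_m -> nat) (sigma : 'I_m -> {perm 'I_n}).
Hypothesis hkeq : k_equitable d k sigma.

Local Notation D := (dmax d).
Local Notation V := (vtx n m k D).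

Definition unsatB i : {set 'I_m} := ~: [set j | satisfied d sigma i j].

Lemma d_le_dmax i j : d i j <= D.
Proof.
rewrite /dmax; apply: leq_trans (@leq_bigmax _ (fun j => d i j) j) _.
exact: (@leq_bigmax _ (fun i => \max_(j < m) d i j) i).
Qed.

Lemma d_le_dstar i j : d i j <= dstar d j.
Proof. exact: (@leq_bigmax _ (fun i => d i j) i). Qed.

Lemma sat_lt i j : satisfied d sigma i j -> sigma j i < D.
Proof. move=> h; exact: leq_trans h (d_le_dmax i j). Qed.

Lemma unsat_lt i j : j \in unsatB i -> index j (enum (unsatB i)) < m - k.
Proof.
move=> h; rewrite -[X in X < _]/(index j (enum (mem (unsatB i)))).
have := index_mem j (enum (unsatB i)); rewrite mem_enum h => /leq_trans; apply.
rewrite -cardE /unsatB.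
have := cardsC [set j | satisfied d sigma i j]; rewrite card_ord.
have := hkeq i; set a := #|[set _ | _]|; set b := #|~: _|; lia.
Qed.

Definition partnerB (v : 'I_n * 'I_m) : V :=
  let: (i, j) := v in
  if satisfied d sigma i j then
    (if (insub (sigma j i : nat) : option 'I_D) is Some dd then inr (inl (dd, j)) else inl v)
  else (if (insub (index j (enum (unsatB i))) : option 'I_(m - k)) is Some l
        then inr (inr (i, l)) else inl v).

Lemma partner_sat i j (h : satisfied d sigma i j) :
  partnerB (i, j) = inr (inl (Ordinal (sat_lt h), j)).
Proof.
rewrite /= h; case: insubP => [dd _ hdd|]; last by rewrite (sat_lt h).
by congr (inr (inl (_, _))); apply: val_inj.
Qed.

Lemma partner_unsat i j (h : j \in unsatB i) :
  partnerB (i, j) = inr (inr (i, Ordinal (unsat_lt h))).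
Proof.
have h' : ~~ satisfied d sigma i j by move: h; rewrite !inE.
rewrite /= (negbTE h'); case: insubP => [l _ hl|]; last by rewrite (unsat_lt h).
by congr (inr (inr (_, _))); apply: val_inj.
Qed.

Lemma partner_inr v : exists z, partnerB v = inr z.
Proof.
case: v => i j; case: (boolP (satisfied d sigma i j)) => h.
  by rewrite partner_sat; eauto.
have h' : j \in unsatB i by rewrite !inE.
by rewrite partner_unsat; eauto.
Qed.

Lemma partner_inj : injective partnerB.
Proof.
move=> [i1 j1] [i2 j2].
have cs : forall i j, satisfied d sigma i j \/ j \in unsatB i.
  by move=> i j; rewrite !inE; case: (satisfied _ _ _ _); [left|right].
case: (cs i1 j1) => h1; case: (cs i2 j2) => h2;
  rewrite ?(partner_sat h1) ?(partner_sat h2) ?(partner_unsat h1) ?(partner_unsat h2) //.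
- move=> [e ej]; subst j2; congr pair; apply: (@perm_inj _ (sigma j1)); exact: val_inj.
- move=> [ei el]; subst i2; congr pair.
  by have := congr1 (nth j1 (enum (unsatB i1))) el; rewrite !nth_index // mem_enum.
Qed.

Definition edgeB v : {set V} := [set inl v; partnerB v].

Lemma edgeB_inj : injective edgeB.
Proof.
move=> v1 v2 e.
have : inl v1 \in edgeB v2 by rewrite -e set21.
rewrite !inE => /orP [/eqP [] //| /eqP h].
by have [z hz] := partner_inr v2; rewrite hz in h.
Qed.

Lemma back_matching :
  exists M : {set {set V}}, is_matching d M /\ #|M| = n * m.
Proof.
exists [set edgeB v | v in [set: 'I_n * 'I_m]]; split; last first.
  by rewrite card_imset ?cardsT ?card_prod ?card_ord //; exact: edgeB_inj.
split.
  move=> e /imsetP [[i j] _ ->]; exists (inl (i, j)), (partnerB (i, j)); split => //.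
  - case: (boolP (satisfied d sigma i j)) => h.
      rewrite partner_sat /=; exact: leq_trans h (d_le_dstar i j).
    have h' : j \in unsatB i by rewrite !inE.
    by rewrite partner_unsat.
  - case: (boolP (satisfied d sigma i j)) => h.
      by rewrite partner_sat /= eqxx.
    have h' : j \in unsatB i by rewrite !inE.
    by rewrite partner_unsat /= eqxx.
move=> e1 e2 /imsetP [v1 _ ->] /imsetP [v2 _ ->] ne.
have nv : v1 != v2 by apply: contraNneq ne => ->.
rewrite -setI_eq0; apply/eqP/setP => x; rewrite !inE.
apply/negbTE/negP => /andP [/orP [] /eqP -> /orP [] /eqP].
- by move=> [] e; rewrite e eqxx in nv.
- by have [z hz] := partner_inr v2; rewrite hz.
- by have [z hz] := partner_inr v1; rewrite hz.
- by move/partner_inj => e; rewrite e eqxx in nv.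
Qed.
End Back.

Section Fwd.
Variables (n m k : nat) (d : 'I_n -> 'I_m -> nat).
Local Notation D := (dmax d).
Local Notation V := (vtx n m k D).
Local Notation Z := (('I_D * 'I_m) + ('I_n * 'I_(m - k)))%type.
Variable M : {set {set V}}.
Hypothesis hM : is_matching d M.
Hypothesis hk : k <= m.
Hypothesis hcard : #|M| = n * m.

Lemma edge_shape e : e \in M ->
  exists v z, [/\ adjV d v z, in_G d (inr z) & e = [set inl v; inr z]].
Proof.
move=> /hM.1 [[x|x] [[y|y] [hx hy hxy ->]]] //.
  by exists x, y.
by exists y, x; split => //; rewrite setUC.
Qed.

Lemma edge_inl e a b : e \in M -> inl a \in e -> inl b \in e -> a = b.
Proof.
move=> /edge_shape [v [z [_ _ ->]]]; rewrite !inE.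
by case/orP => /eqP [] // -> ; case/orP => /eqP [] // ->.
Qed.

Lemma edge_eq e1 e2 x : e1 \in M -> e2 \in M -> x \in e1 -> x \in e2 -> e1 = e2.
Proof.
move=> h1 h2 x1 x2; apply/eqP; apply/negPn/negP => ne.
have := hM.2 _ _ h1 h2 ne; rewrite -setI_eq0 => /eqP/setP/(_ x).
by rewrite !inE x1 x2.
Qed.

Definition Fv (e : {set V}) : option ('I_n * 'I_m) := [pick v | inl v \in e].

Lemma Fv_some e : e \in M -> exists a, Fv e = Some a /\ inl a \in e.
Proof.
move=> he; rewrite /Fv; case: pickP => [a ha|none]; first by exists a.
have [v [z [_ _ ee]]] := edge_shape he.
by have := none v; rewrite ee !inE eqxx.
Qed.

Lemma cover v : exists2 e, e \in M & inl v \in e.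
Proof.
have Finj : {in M &, injective Fv}.
  move=> e1 e2 h1 h2 E.
  have [a1 [f1 i1]] := Fv_some h1; have [a2 [f2 i2]] := Fv_some h2.
  move: E; rewrite f1 f2 => [[ea]]; subst a2.
  exact: edge_eq h1 h2 i1 i2.
have sub : Fv @: M \subset [set Some w | w in [set: 'I_n * 'I_m]].
  apply/subsetP => x /imsetP [e he ->]; have [a [-> _]] := Fv_some he.
  by apply/imsetP; exists a.
have : Fv @: M == [set Some w | w in [set: 'I_n * 'I_m]].
  rewrite eqEcard sub /= (card_imset _ (@Some_inj _)) card_in_imset //.
  by rewrite cardsT card_prod !card_ord hcard.
move/eqP => E.
have : Some v \in Fv @: M by rewrite E; apply/imsetP; exists v.
case/imsetP => e he ev; exists e => //.
by have [a [fa ia]] := Fv_some he; move: ev; rewrite fa => [[->]].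
Qed.

Definition P (v : 'I_n * 'I_m) : option Z :=
  [pick z | [exists e in M, (inl v \in e) && (inr z \in e)]].

Lemma P_spec v : exists z, [/\ P v = Some z, adjV d v z &
  exists2 e, e \in M & (inl v \in e) && (inr z \in e)].
Proof.
rewrite /P; case: pickP => [z /existsP [e /andP [he /andP [iv iz]]] | none].
  exists z; split => //; last by exists e => //; rewrite iv iz.
  have := he; case/edge_shape => v' [z' [a _ ee]].
  move: iv iz; rewrite ee !inE => /orP [/eqP [->] | /eqP //] /orP [/eqP // | /eqP [->]] //.
have [e he iv] := cover v.
have := he; case/edge_shape => v' [z' [a _ ee]].
have := none z'; move/negbT/existsPn/(_ e); rewrite he iv /= ee !inE eqxx orbT.
done.
Qed.

Lemma P_inj v1 v2 z : P v1 = Some z -> P v2 = Some z -> v1 = v2.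
Proof.
have [z1 [p1 _ [e1 h1 /andP [a1 b1]]]] := P_spec v1.
have [z2 [p2 _ [e2 h2 /andP [a2 b2]]]] := P_spec v2.
rewrite p1 p2 => [[<-] [e]]; subst z2.
have ee := edge_eq h1 h2 b1 b2; subst e2.
exact: edge_inl h1 a1 a2.
Qed.

Definition key (j : 'I_m) (i : 'I_n) : nat :=
  match P (i, j) with Some (inl p) => nat_of_ord p.1 | _ => D + i end.

Lemma key_inj j : injective (key j).
Proof.
move=> i1 i2; rewrite /key.
have [z1 [p1 a1 _]] := P_spec (i1, j); have [z2 [p2 a2 _]] := P_spec (i2, j).
rewrite p1 p2.
case: z1 p1 a1 => [[dd1 j1]|[i1' l1]] p1 a1; case: z2 p2 a2 => [[dd2 j2]|[i2' l2]] p2 a2 /=.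
- move: a1 a2 => /= /andP [/eqP e1 _] /andP [/eqP e2 _]; subst j1 j2 => e.
  have : dd1 = dd2 by apply: val_inj.
  by move=> ee; subst dd2; have := P_inj p1 p2 => [[]].
- by move=> e; have := ltn_ord dd1; rewrite e; lia.
- by move=> e; have := ltn_ord dd2; rewrite -e; lia.
- by move=> e; apply: val_inj; apply/eqP; rewrite -(eqn_add2l D) e.
Qed.

Definition rank (j : 'I_m) (i : 'I_n) : nat := #|[set i' | key j i' < key j i]|.

Lemma rank_lt j i : rank j i < n.
Proof.
rewrite -[n]card_ord -cardsT; apply: proper_card; rewrite properT.
apply/negP => /eqP e.
have : i \in [set i' | key j i' < key j i] by rewrite e inE.
by rewrite inE ltnn.
Qed.

Lemma rank_mono j a b : key j a < key j b -> rank j a < rank j b.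
Proof.
move=> h; apply: proper_card; rewrite properE; apply/andP; split.
  by apply/subsetP => x; rewrite !inE => h'; exact: ltn_trans h' h.
by apply/subsetPn; exists a; rewrite !inE // ltnn.
Qed.

Lemma rank_inj j : injective (rank j).
Proof.
move=> a b e; case: (ltngtP (key j a) (key j b)) => h.
- by have := rank_mono h; rewrite e ltnn.
- by have := rank_mono h; rewrite e ltnn.
- exact: key_inj h.
Qed.

Lemma rank_le j i dd j' : P (i, j) = Some (inl (dd, j')) -> rank j i <= dd.
Proof.
move=> p; have kd : key j i = dd by rewrite /key p.
rewrite /rank kd cardE -(size_map (key j)) -[X in _ <= X](size_iota 0).
apply: uniq_leq_size; first by rewrite map_inj_uniq ?enum_uniq //; exact: key_inj.
move=> x /mapP [y]; rewrite mem_enum inE => hy ->.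
by rewrite mem_iota.
Qed.

Definition ordf (j : 'I_m) (i : 'I_n) : 'I_n := Ordinal (rank_lt j i).

Lemma ordf_inj j : injective (ordf j).
Proof. by move=> a b /(congr1 val) /= /rank_inj. Qed.

Definition sig (j : 'I_m) : {perm 'I_n} := perm (@ordf_inj j).

Lemma sat_inl i j dd j' : P (i, j) = Some (inl (dd, j')) -> satisfied d sig i j.
Proof.
move=> p; have [z [p' a _]] := P_spec (i, j).
rewrite p in p'; case: p' => ez; subst z.
move: a => /= /andP [_ a].
rewrite /satisfied /completion permE /=; exact: leq_ltn_trans (rank_le p) a.
Qed.

Lemma fwd_equitable : k_equitable d k sig.
Proof.
move=> i.
pose g (j : 'I_m) : option 'I_(m - k) :=
  match P (i, j) with Some (inr p) => Some p.2 | _ => None end.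
set S := [set j | satisfied d sig i j].
have gin : {in ~: S &, injective g}.
  move=> j1 j2; rewrite !inE /g => n1 n2.
  have [z1 [p1 a1 _]] := P_spec (i, j1); have [z2 [p2 a2 _]] := P_spec (i, j2).
  rewrite p1 p2.
  case: z1 p1 a1 => [[dd1 j1']|[i1 l1]] p1 a1; first by rewrite (sat_inl p1) in n1.
  case: z2 p2 a2 => [[dd2 j2']|[i2 l2]] p2 a2; first by rewrite (sat_inl p2) in n2.
  move: a1 a2 => /= /eqP e1 /eqP e2; subst i1 i2 => [[el]]; subst l2.
  by have := P_inj p1 p2 => [[]].
have sub : g @: (~: S) \subset [set Some l | l in [set: 'I_(m - k)]].
  apply/subsetP => x /imsetP [j]; rewrite inE /g => nj ->.
  have [z [p a _]] := P_spec (i, j); rewrite p.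
  case: z p a => [[dd j']|[i' l]] p a; first by move: nj; rewrite !inE (sat_inl p).
  by apply/imsetP; exists l.
have := subset_leq_card sub; rewrite (card_imset _ (@Some_inj _)) card_in_imset //.
rewrite cardsT card_ord => h.
have := cardsC S; rewrite card_ord.
move: h; set a := #|S|; set b := #|~: S|; move: hk; lia.
Qed.

End Fwd.

Theorem lemma1 (n m k : nat) (d : 'I_n -> 'I_m -> nat)
  (hd : forall i j, 1 <= d i j) (hk : k <= m) :
  (exists M : {set {set vtx n m k (dmax d)}}, is_matching d M /\ #|M| = n * m)
  <-> (exists sigma : 'I_m -> {perm 'I_n}, k_equitable d k sigma).
Proof.
split.
  move=> [M [hM hc]]; exists (sig hM hk hc); exact: fwd_equitable.
move=> [sigma hs]; exact: back_matching hs.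
Qed.
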